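(* Let $M$ be a quasi-minimal Lorentz surface in the pseudo-Euclidean space $\mathbb{E}^4_2$. If $M$ has parallel mean curvature vector field, then $M$ has flat normal connection.
   Context: $\mathbb{E}^4_2$ is $\mathbb{R}^4$ with the metric $\langle\cdot,\cdot\rangle = dx_1^2+dx_2^2-dx_3^2-dx_4^2$. A Lorentz surface in $\mathbb{E}^4_2$ is an immersed surface whose induced metric is Lorentzian (signature $(1,1)$); its normal bundle then also carries a metric of signature $(1,1)$. Let $h$ be the second fundamental form, $D$ the normal connection and $H=\frac12\operatorname{tr}h$ the mean curvature vector field. The surface is quasi-minimal if $H$ is lightlike at every point, i.e. $H\neq 0$ and $\langle H,H\rangle=0$. The mean curvature vector field is parallel if $DH=0$ identically. The normal connection is flat if the curvature tensor of $D$ vanishes identically (equivalently, the normal curvature $\varkappa$ vanishes). *)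

(* Defs.v *)
From Stdlib Require Import Reals List.
From Coquelicot Require Import Coquelicot.
Open Scope R_scope.

Record V4 := mkV4 { c1 : R; c2 : R; c3 : R; c4 : R }.

Definition vzero : V4 := mkV4 0 0 0 0.
Definition vadd (a b : V4) : V4 :=
  mkV4 (c1 a + c1 b) (c2 a + c2 b) (c3 a + c3 b) (c4 a + c4 b).
Definition vscal (k : R) (a : V4) : V4 :=
  mkV4 (k * c1 a) (k * c2 a) (k * c3 a) (k * c4 a).
Definition vsub (a b : V4) : V4 := vadd a (vscal (-1) b).

Definition ip (a b : V4) : R :=
  c1 a * c1 b + c2 a * c2 b - c3 a * c3 b - c4 a * c4 b.

Definition pd (b : bool) (f : R * R -> R) (p : R * R) : R :=
  if b then Derive (fun t => f (t, snd p)) (fst p)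
  else Derive (fun t => f (fst p, t)) (snd p).

Fixpoint iterD (s : list bool) (f : R * R -> R) : R * R -> R :=
  match s with
  | nil => f
  | b :: s' => pd b (iterD s' f)
  end.

Definition smooth_on (U : R * R -> Prop) (f : R * R -> R) : Prop :=
  forall (s : list bool) (p : R * R), U p ->
    ex_derive (fun t => iterD s f (t, snd p)) (fst p) /\
    ex_derive (fun t => iterD s f (fst p, t)) (snd p) /\
    continuous (iterD s f) p.

Definition smoothV_on (U : R * R -> Prop) (F : R * R -> V4) : Prop :=
  smooth_on U (fun p => c1 (F p)) /\ smooth_on U (fun p => c2 (F p)) /\
  smooth_on U (fun p => c3 (F p)) /\ smooth_on U (fun p => c4 (F p)).

Definition vpd (b : bool) (F : R * R -> V4) (p : R * R) : V4 :=
  mkV4 (pd b (fun q => c1 (F q)) p) (pd b (fun q => c2 (F q)) p)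
       (pd b (fun q => c3 (F q)) p) (pd b (fun q => c4 (F q)) p).

Section Surface.
Variable x : R * R -> V4.

Definition xu := vpd true x.
Definition xv := vpd false x.

Definition g11 p := ip (xu p) (xu p).
Definition g12 p := ip (xu p) (xv p).
Definition g22 p := ip (xv p) (xv p).
Definition gdet p := g11 p * g22 p - g12 p * g12 p.

(** The induced metric is Lorentzian (signature (1,1)) at p;
    in particular x is an immersion at p. *)
Definition lorentzian_at p : Prop := gdet p < 0.

Definition gi11 p := g22 p / gdet p.
Definition gi12 p := - g12 p / gdet p.
Definition gi22 p := g11 p / gdet p.

Definition tanp p (v : V4) : V4 :=
  let a := ip v (xu p) in
  let b := ip v (xv p) in
  vadd (vscal (gi11 p * a + gi12 p * b) (xu p))
       (vscal (gi12 p * a + gi22 p * b) (xv p)).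
Definition norp p (v : V4) : V4 := vsub v (tanp p v).

Definition h11 p := norp p (vpd true xu p).
Definition h12 p := norp p (vpd false xu p).
Definition h22 p := norp p (vpd false xv p).

Definition Hmc p : V4 :=
  vscal (1/2) (vadd (vscal (gi11 p) (h11 p))
                 (vadd (vscal (2 * gi12 p) (h12 p)) (vscal (gi22 p) (h22 p)))).

Definition Dn (b : bool) (xi : R * R -> V4) (p : R * R) : V4 :=
  norp p (vpd b xi p).

Definition normal_field_on (U : R * R -> Prop) (xi : R * R -> V4) : Prop :=
  forall p, U p -> ip (xi p) (xu p) = 0 /\ ip (xi p) (xv p) = 0.
End Surface.

Definition lorentz_surface (U : R * R -> Prop) (x : R * R -> V4) : Prop :=
  open U /\ smoothV_on U x /\ forall p, U p -> lorentzian_at x p.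

Definition quasi_minimal (U : R * R -> Prop) (x : R * R -> V4) : Prop :=
  forall p, U p -> Hmc x p <> vzero /\ ip (Hmc x p) (Hmc x p) = 0.

(** DH = 0: D_X H = 0 for X = d/du and X = d/dv (hence for all X by linearity). *)
Definition parallel_mean_curvature (U : R * R -> Prop) (x : R * R -> V4) : Prop :=
  forall p, U p -> Dn x true (Hmc x) p = vzero /\ Dn x false (Hmc x) p = vzero.

(** Flat normal connection: R^D(d/du, d/dv) xi = D_u D_v xi - D_v D_u xi = 0
    (the bracket [d/du, d/dv] vanishes) for every smooth normal field xi. *)
Definition flat_normal_connection (U : R * R -> Prop) (x : R * R -> V4) : Prop :=
  forall xi : R * R -> V4, smoothV_on U xi -> normal_field_on x U xi ->
    forall p, U p ->
      Dn x true (Dn x false xi) p = Dn x false (Dn x true xi) p.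

(* Main.v *)
Require Import Defs.
From Stdlib Require Import Reals.
From Coquelicot Require Import Coquelicot.
From Stdlib Require Import Lra Lia List.
Require Import Defs.
Open Scope R_scope.

Section Sm.
Variable U : R * R -> Prop.
Hypothesis Uo : open U.

Definition base (f : R * R -> R) (p : R * R) : Prop :=
    ex_derive (fun t => f (t, snd p)) (fst p) /\
    ex_derive (fun t => f (fst p, t)) (snd p) /\
    continuous f p.

Lemma loc_slice p : U p ->
  locally (fst p) (fun t => U (t, snd p)) /\ locally (snd p) (fun t => U (fst p, t)).
Proof.
  intros Hp. pose proof (Uo p Hp) as L.
  destruct p as [u v].
  assert (L2 : locally_2d (fun a b => U (a, b)) u v).
  { apply locally_2d_locally. eapply filter_imp; [|exact L].
    intros [a b]; simpl; auto. }
  split; simpl.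
  - exact (locally_2d_1d_const_y _ _ _ L2).
  - exact (locally_2d_1d_const_x _ _ _ L2).
Qed.

Definition eqU (f g : R * R -> R) := forall q, U q -> f q = g q.

Lemma pd_loc b f g p : eqU f g -> U p -> pd b f p = pd b g p.
Proof.
  intros E Hp; destruct (loc_slice p Hp) as [L1 L2]; destruct b; simpl;
  apply Derive_ext_loc.
  - eapply filter_imp; [|exact L1]; intros t Ht; apply E; exact Ht.
  - eapply filter_imp; [|exact L2]; intros t Ht; apply E; exact Ht.
Qed.

Lemma iterD_loc f g s : eqU f g -> eqU (iterD s f) (iterD s g).
Proof.
  intros E; induction s as [|b s IH]; simpl; intros q Hq; auto.
  apply pd_loc; auto.
Qed.

Lemma base_loc f g p : eqU f g -> U p -> base f p -> base g p.
Proof.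
  intros E Hp [H1 [H2 H3]]; destruct (loc_slice p Hp) as [L1 L2].
  split; [|split].
  - eapply ex_derive_ext_loc; [|exact H1].
    eapply filter_imp; [|exact L1]; intros t Ht; apply E; exact Ht.
  - eapply ex_derive_ext_loc; [|exact H2].
    eapply filter_imp; [|exact L2]; intros t Ht; apply E; exact Ht.
  - apply continuous_ext_loc with f; [|exact H3].
    eapply filter_imp; [|exact (Uo p Hp)]; intros t Ht; apply (E t Ht).
Qed.

Definition Sm (n : nat) (f : R * R -> R) : Prop :=
  forall s, (length s <= n)%nat -> forall p, U p -> base (iterD s f) p.

Lemma Sm_loc n f g : Sm n f -> eqU f g -> Sm n g.
Proof.
  intros H E s Hs p Hp. apply base_loc with (iterD s f); auto.
  apply iterD_loc; auto.
Qed.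

Lemma iterD_app s b f : iterD (s ++ b :: nil) f = iterD s (pd b f).
Proof. induction s as [|c s IH]; simpl; auto. rewrite IH; auto. Qed.

Lemma Sm_pd n b f : Sm (S n) f -> Sm n (pd b f).
Proof.
  intros H s Hs p Hp. rewrite <- iterD_app. apply H; auto.
  rewrite length_app; simpl; lia.
Qed.

Lemma Sm_weak n f : Sm (S n) f -> Sm n f.
Proof. intros H s Hs; apply H; lia. Qed.

Lemma Sm_base n f p : Sm n f -> U p -> base f p.
Proof. intros H Hp; apply (H nil); simpl; auto; lia. Qed.

Lemma list_last (s : list bool) : s = nil \/ exists s0 b, s = s0 ++ b :: nil.
Proof.
  induction s using rev_ind; [left; auto|right; eauto].
Qed.

Lemma Sm_zero f : (forall p, U p -> base f p) -> Sm 0 f.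
Proof.
  intros H s Hs; destruct s; simpl in *; [auto|lia].
Qed.

Lemma Sm_step n f : (forall p, U p -> base f p) -> (forall b, Sm n (pd b f)) -> Sm (S n) f.
Proof.
  intros H0 H s Hs p Hp. destruct (list_last s) as [->|[s0 [b ->]]]; simpl; auto.
  rewrite iterD_app. apply H; auto. rewrite length_app in Hs; simpl in Hs; lia.
Qed.

Lemma base_plus f g p : base f p -> base g p -> base (fun q => f q + g q) p.
Proof.
  intros [a1 [a2 a3]] [b1 [b2 b3]]; split; [|split].
  - apply (ex_derive_plus (fun t => f (t, snd p)) (fun t => g (t, snd p))); auto.
  - apply (ex_derive_plus (fun t => f (fst p, t)) (fun t => g (fst p, t))); auto.
  - apply (continuous_plus f g); auto.
Qed.

Lemma base_mult f g p : base f p -> base g p -> base (fun q => f q * g q) p.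
Proof.
  intros [a1 [a2 a3]] [b1 [b2 b3]]; split; [|split].
  - apply (ex_derive_mult (fun t => f (t, snd p)) (fun t => g (t, snd p))); auto.
  - apply (ex_derive_mult (fun t => f (fst p, t)) (fun t => g (fst p, t))); auto.
  - apply (continuous_mult f g); auto.
Qed.

Lemma base_inv g p : base g p -> g p <> 0 -> base (fun q => / g q) p.
Proof.
  intros [b1 [b2 b3]] Hn; split; [|split].
  - apply (ex_derive_inv (fun t => g (t, snd p))); auto. destruct p; auto.
  - apply (ex_derive_inv (fun t => g (fst p, t))); auto. destruct p; auto.
  - apply (continuous_comp g (fun y : R => / y)); auto. apply continuous_Rinv; auto.
Qed.

Lemma base_const c p : base (fun _ => c) p.
Proof.
  split; [|split]; try apply ex_derive_const. apply continuous_const.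
Qed.

Lemma pd_plus b f g p : base f p -> base g p ->
  pd b (fun q => f q + g q) p = pd b f p + pd b g p.
Proof.
  intros [a1 [a2 a3]] [b1 [b2 b3]]; destruct b; simpl.
  - apply (Derive_plus (fun t => f (t, snd p)) (fun t => g (t, snd p))); auto.
  - apply (Derive_plus (fun t => f (fst p, t)) (fun t => g (fst p, t))); auto.
Qed.

Lemma pd_mult b f g p : base f p -> base g p ->
  pd b (fun q => f q * g q) p = pd b f p * g p + f p * pd b g p.
Proof.
  intros [a1 [a2 a3]] [b1 [b2 b3]]; destruct b, p as [u v]; simpl in *.
  - exact (Derive_mult (fun t => f (t, v)) (fun t => g (t, v)) u a1 b1).
  - exact (Derive_mult (fun t => f (u, t)) (fun t => g (u, t)) v a2 b2).
Qed.

Lemma pd_inv b g p : base g p -> g p <> 0 ->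
  pd b (fun q => / g q) p = (-1 * pd b g p) * (/ g p * / g p).
Proof.
  intros [a1 [a2 a3]] Hn; destruct b, p as [u v]; simpl in *.
  - rewrite (Derive_inv (fun t => g (t, v)) u a1 Hn). field. exact Hn.
  - rewrite (Derive_inv (fun t => g (u, t)) v a2 Hn). field. exact Hn.
Qed.

Lemma pd_const b c p : pd b (fun _ => c) p = 0.
Proof. destruct b; simpl; apply Derive_const. Qed.

Lemma Sm_const n c : Sm n (fun _ => c).
Proof.
  revert c; induction n; intros c.
  - apply Sm_zero; intros; apply base_const.
  - apply Sm_step; [intros; apply base_const|].
    intros b. apply Sm_loc with (fun _ => 0); auto.
    intros q _; rewrite pd_const; auto.
Qed.

Lemma Sm_plus n f g : Sm n f -> Sm n g -> Sm n (fun q => f q + g q).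
Proof.
  revert f g; induction n; intros f g Hf Hg.
  - apply Sm_zero; intros p Hp; apply base_plus; [exact (Sm_base _ _ _ Hf Hp)|exact (Sm_base _ _ _ Hg Hp)].
  - apply Sm_step; [intros p Hp; apply base_plus; [exact (Sm_base _ _ _ Hf Hp)|exact (Sm_base _ _ _ Hg Hp)]|].
    intros b. apply Sm_loc with (fun q => pd b f q + pd b g q).
    + apply IHn; apply Sm_pd; assumption.
    + intros q Hq; rewrite pd_plus; [reflexivity|exact (Sm_base _ _ _ Hf Hq)|exact (Sm_base _ _ _ Hg Hq)].
Qed.

Lemma Sm_mult n f g : Sm n f -> Sm n g -> Sm n (fun q => f q * g q).
Proof.
  revert f g; induction n; intros f g Hf Hg.
  - apply Sm_zero; intros p Hp; apply base_mult; [exact (Sm_base _ _ _ Hf Hp)|exact (Sm_base _ _ _ Hg Hp)].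
  - apply Sm_step; [intros p Hp; apply base_mult; [exact (Sm_base _ _ _ Hf Hp)|exact (Sm_base _ _ _ Hg Hp)]|].
    intros b. apply Sm_loc with (fun q => pd b f q * g q + f q * pd b g q).
    + apply Sm_plus; apply IHn.
      * apply Sm_pd; exact Hf.
      * apply Sm_weak; exact Hg.
      * apply Sm_weak; exact Hf.
      * apply Sm_pd; exact Hg.
    + intros q Hq; rewrite pd_mult; [reflexivity|exact (Sm_base _ _ _ Hf Hq)|exact (Sm_base _ _ _ Hg Hq)].
Qed.

Lemma Sm_inv n g : Sm n g -> (forall q, U q -> g q <> 0) -> Sm n (fun q => / g q).
Proof.
  revert g; induction n; intros g Hg Hn.
  - apply Sm_zero; intros p Hp; apply base_inv; [exact (Sm_base _ _ _ Hg Hp)|exact (Hn p Hp)].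
  - apply Sm_step; [intros p Hp; apply base_inv; [exact (Sm_base _ _ _ Hg Hp)|exact (Hn p Hp)]|].
    intros b. apply Sm_loc with (fun q => (-1 * pd b g q) * (/ g q * / g q)).
    + pose proof (IHn g (Sm_weak _ _ Hg) Hn) as IH.
      apply Sm_mult; apply Sm_mult; [apply Sm_const|apply Sm_pd; exact Hg|exact IH|exact IH].
    + intros q Hq; rewrite pd_inv; [reflexivity|exact (Sm_base _ _ _ Hg Hq)|exact (Hn q Hq)].
Qed.

Lemma smooth_Sm f : smooth_on U f <-> forall n, Sm n f.
Proof.
  split.
  - intros H n s _ p Hp; apply H; auto.
  - intros H s p Hp; apply (H (length s) s); auto.
Qed.

Lemma sm_plus f g : smooth_on U f -> smooth_on U g -> smooth_on U (fun q => f q + g q).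
Proof. rewrite !smooth_Sm; intros; apply Sm_plus; auto. Qed.
Lemma sm_mult f g : smooth_on U f -> smooth_on U g -> smooth_on U (fun q => f q * g q).
Proof. rewrite !smooth_Sm; intros; apply Sm_mult; auto. Qed.
Lemma sm_inv g : smooth_on U g -> (forall q, U q -> g q <> 0) -> smooth_on U (fun q => / g q).
Proof. rewrite !smooth_Sm; intros; apply Sm_inv; auto. Qed.
Lemma sm_const c : smooth_on U (fun _ => c).
Proof. rewrite !smooth_Sm; intros; apply Sm_const; auto. Qed.
Lemma sm_pd b f : smooth_on U f -> smooth_on U (pd b f).
Proof. rewrite !smooth_Sm; intros H n; apply Sm_pd; auto. Qed.
Lemma sm_ext f g : smooth_on U f -> (forall q, f q = g q) -> smooth_on U g.
Proof. rewrite !smooth_Sm; intros H E n; apply Sm_loc with f; auto. intros q _; auto. Qed.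
Lemma sm_minus f g : smooth_on U f -> smooth_on U g -> smooth_on U (fun q => f q - g q).
Proof.
  intros; apply sm_ext with (fun q => f q + (-1) * g q).
  apply sm_plus; auto; apply sm_mult; auto; apply sm_const. intros; ring.
Qed.
Lemma sm_div f g : smooth_on U f -> smooth_on U g -> (forall q, U q -> g q <> 0) -> smooth_on U (fun q => f q / g q).
Proof. intros; unfold Rdiv; apply sm_mult; auto; apply sm_inv; auto. Qed.
Lemma sm_opp f : smooth_on U f -> smooth_on U (fun q => - f q).
Proof.
  intros; apply sm_ext with (fun q => (-1) * f q).
  apply sm_mult; auto; apply sm_const. intros; ring.
Qed.
Lemma sm_base f p : smooth_on U f -> U p -> base f p.
Proof. intros H Hp; apply (H nil); auto. Qed.

End Sm.

Section V.
Variable U : R * R -> Prop.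
Hypothesis Uo : open U.
Variable x : R * R -> V4.
Hypothesis Hx : smoothV_on U x.
Hypothesis Hg : forall q, U q -> gdet x q <> 0.

Lemma sP f g : smooth_on U f -> smooth_on U g -> smooth_on U (fun q => f q + g q).
Proof. intros; apply sm_plus; assumption. Qed.
Lemma sM f g : smooth_on U f -> smooth_on U g -> smooth_on U (fun q => f q * g q).
Proof. intros; apply sm_mult; assumption. Qed.
Lemma sB f g : smooth_on U f -> smooth_on U g -> smooth_on U (fun q => f q - g q).
Proof. intros; apply sm_minus; assumption. Qed.
Lemma sD f g : smooth_on U f -> smooth_on U g -> (forall q, U q -> g q <> 0) -> smooth_on U (fun q => f q / g q).
Proof. intros; apply sm_div; assumption. Qed.
Lemma sO f : smooth_on U f -> smooth_on U (fun q => - f q).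
Proof. intros; apply sm_opp; assumption. Qed.
Lemma sC c : smooth_on U (fun _ => c).
Proof. intros; apply sm_const; assumption. Qed.
Lemma sPD b f : smooth_on U f -> smooth_on U (pd b f).
Proof. intros; apply sm_pd; assumption. Qed.

Ltac sm_step := match goal with
 | |- smooth_on _ (fun q => _ + _) => apply sP
 | |- smooth_on _ (fun q => _ - _) => apply sB
 | |- smooth_on _ (fun q => _ * _) => apply sM
 | |- smooth_on _ (fun q => _ / _) => apply sD
 | |- smooth_on _ (fun q => - _) => apply sO
 | |- smooth_on _ (fun q => ?c) => apply sC
 end.
Ltac sm := repeat (assumption || sm_step).

Lemma smV_vpd b F : smoothV_on U F -> smoothV_on U (vpd b F).
Proof.
  intros [H1 [H2 [H3 H4]]]; split; [|split; [|split]]; apply sPD; assumption.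
Qed.

Lemma sm_ip F G : smoothV_on U F -> smoothV_on U G -> smooth_on U (fun q => ip (F q) (G q)).
Proof.
  intros [F1 [F2 [F3 F4]]] [G1 [G2 [G3 G4]]]; unfold ip.
  sm.
Qed.

Lemma smV_add F G : smoothV_on U F -> smoothV_on U G -> smoothV_on U (fun q => vadd (F q) (G q)).
Proof.
  intros [F1 [F2 [F3 F4]]] [G1 [G2 [G3 G4]]]; split; [|split; [|split]]; simpl; apply sP; assumption.
Qed.

Lemma smV_scal f F : smooth_on U f -> smoothV_on U F -> smoothV_on U (fun q => vscal (f q) (F q)).
Proof.
  intros Hf [F1 [F2 [F3 F4]]]; split; [|split; [|split]]; simpl; apply sM; assumption.
Qed.

Lemma smV_sub F G : smoothV_on U F -> smoothV_on U G -> smoothV_on U (fun q => vsub (F q) (G q)).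
Proof.
  intros HF HG; unfold vsub; apply smV_add; [exact HF|]; apply smV_scal; [apply sC|exact HG].
Qed.

Lemma smV_xu : smoothV_on U (xu x).
Proof. apply smV_vpd; exact Hx. Qed.
Lemma smV_xv : smoothV_on U (xv x).
Proof. apply smV_vpd; exact Hx. Qed.

Lemma sm_g11 : smooth_on U (g11 x).
Proof. apply sm_ip; [apply smV_xu|apply smV_xu]. Qed.
Lemma sm_g12 : smooth_on U (g12 x).
Proof. apply sm_ip; [apply smV_xu|apply smV_xv]. Qed.
Lemma sm_g22 : smooth_on U (g22 x).
Proof. apply sm_ip; [apply smV_xv|apply smV_xv]. Qed.
Lemma sm_gdet : smooth_on U (gdet x).
Proof.
  unfold gdet; apply sB; apply sM; first [apply sm_g11|apply sm_g12|apply sm_g22].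
Qed.
Lemma sm_gi11 : smooth_on U (gi11 x).
Proof. unfold gi11; apply sD; [apply sm_g22|apply sm_gdet|exact Hg]. Qed.
Lemma sm_gi12 : smooth_on U (gi12 x).
Proof. unfold gi12; apply sD; [apply sO; apply sm_g12|apply sm_gdet|exact Hg]. Qed.
Lemma sm_gi22 : smooth_on U (gi22 x).
Proof. unfold gi22; apply sD; [apply sm_g11|apply sm_gdet|exact Hg]. Qed.

Lemma smV_tanp W : smoothV_on U W -> smoothV_on U (fun q => tanp x q (W q)).
Proof.
  intros HW. unfold tanp. apply smV_add; apply smV_scal;
  try apply smV_xu; try apply smV_xv;
  apply sP; apply sM;
  first [apply sm_gi11|apply sm_gi12|apply sm_gi22|apply sm_ip; [exact HW|first [apply smV_xu|apply smV_xv]]].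
Qed.

Lemma smV_norp W : smoothV_on U W -> smoothV_on U (fun q => norp x q (W q)).
Proof.
  intros HW; unfold norp; apply smV_sub; [exact HW|apply smV_tanp; exact HW].
Qed.

Lemma smV_h11 : smoothV_on U (h11 x).
Proof. apply smV_norp. apply smV_vpd, smV_xu. Qed.
Lemma smV_h12 : smoothV_on U (h12 x).
Proof. apply smV_norp. apply smV_vpd, smV_xu. Qed.
Lemma smV_h22 : smoothV_on U (h22 x).
Proof. apply smV_norp. apply smV_vpd, smV_xv. Qed.

Lemma smV_H : smoothV_on U (Hmc x).
Proof.
  unfold Hmc. apply smV_scal; [apply sC|].
  apply smV_add; [|apply smV_add]; apply smV_scal;
  try apply smV_h11; try apply smV_h12; try apply smV_h22;
  try apply sm_gi11; try apply sm_gi22.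
  apply sM; [apply sC|apply sm_gi12].
Qed.

End V.

Lemma cont_2d (g : R * R -> R) u v : continuous g (u, v) ->
  continuity_2d_pt (fun a b => g (a, b)) u v.
Proof.
  intros H. apply continuity_2d_pt_filterlim.
  eapply filterlim_ext; [|exact H]. intros [a b]; reflexivity.
Qed.

Section C.
Variable U : R * R -> Prop.
Hypothesis Uo : open U.

Lemma schwarz f p : smooth_on U f -> U p -> pd true (pd false f) p = pd false (pd true f) p.
Proof.
  intros Hf Hp. destruct p as [u v]. unfold pd; simpl.
  apply (Schwarz (fun a b => f (a, b)) u v).
  - assert (L : locally_2d (fun a b => U (a, b)) u v).
    { apply locally_2d_locally. eapply filter_imp; [|exact (Uo _ Hp)].
      intros [a b]; simpl; auto. }
    eapply locally_2d_impl; [|exact L].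
    apply locally_2d_locally. apply filter_forall. intros [a b] Hab; simpl.
    destruct (Hf nil (a, b) Hab) as [E1 [E2 _]].
    destruct (Hf (false :: nil) (a, b) Hab) as [F1 _].
    destruct (Hf (true :: nil) (a, b) Hab) as [_ [G2 _]].
    simpl in *. tauto.
  - destruct (Hf (true :: false :: nil) (u, v) Hp) as [_ [_ C]].
    exact (cont_2d _ u v C).
  - destruct (Hf (false :: true :: nil) (u, v) Hp) as [_ [_ C]].
    exact (cont_2d _ u v C).
Qed.

Lemma pd_zero b f p : (forall q, U q -> f q = 0) -> U p -> pd b f p = 0.
Proof.
  intros H Hp. rewrite (pd_loc U Uo b f (fun _ => 0) p); auto.
  apply pd_const.
Qed.

Lemma pd_minus b f g p : base f p -> base g p ->
  pd b (fun q => f q - g q) p = pd b f p - pd b g p.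
Proof.
  intros [a1 [a2 a3]] [b1 [b2 b3]]; destruct b, p as [u v]; simpl in *.
  - exact (Derive_minus (fun t => f (t, v)) (fun t => g (t, v)) u a1 b1).
  - exact (Derive_minus (fun t => f (u, t)) (fun t => g (u, t)) v a2 b2).
Qed.

Lemma base_minus f g p : base f p -> base g p -> base (fun q => f q - g q) p.
Proof.
  intros [a1 [a2 a3]] [b1 [b2 b3]]; split; [|split].
  - apply (ex_derive_minus (fun t => f (t, snd p)) (fun t => g (t, snd p))); assumption.
  - apply (ex_derive_minus (fun t => f (fst p, t)) (fun t => g (fst p, t))); assumption.
  - apply (continuous_minus f g); assumption.
Qed.

Ltac bs := repeat match goal with
 | |- base (fun q => _ + _) _ => apply base_plus
 | |- base (fun q => _ - _) _ => apply base_minus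
 | |- base (fun q => _ * _) _ => apply base_mult
 | |- base _ _ => (eapply sm_base; eassumption)
 end.

Lemma pd_ip b F G p : smoothV_on U F -> smoothV_on U G -> U p ->
  pd b (fun q => ip (F q) (G q)) p = ip (vpd b F p) (G p) + ip (F p) (vpd b G p).
Proof.
  intros [F1 [F2 [F3 F4]]] [G1 [G2 [G3 G4]]] Hp. unfold ip; simpl.
  rewrite !pd_minus by bs. rewrite !pd_plus by bs. rewrite !pd_mult by bs. ring.
Qed.

End C.

Lemma V4_eq a b : c1 a = c1 b -> c2 a = c2 b -> c3 a = c3 b -> c4 a = c4 b -> a = b.
Proof. destruct a, b; simpl; intros; subst; reflexivity. Qed.

Ltac v4 := apply V4_eq; simpl.

Lemma ip_addl a b c : ip (vadd a b) c = ip a c + ip b c.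
Proof. unfold ip, vadd; simpl; ring. Qed.
Lemma ip_addr a b c : ip c (vadd a b) = ip c a + ip c b.
Proof. unfold ip, vadd; simpl; ring. Qed.
Lemma ip_scall k a c : ip (vscal k a) c = k * ip a c.
Proof. unfold ip, vscal; simpl; ring. Qed.
Lemma ip_scalr k a c : ip c (vscal k a) = k * ip c a.
Proof. unfold ip, vscal; simpl; ring. Qed.
Lemma ip_subl a b c : ip (vsub a b) c = ip a c - ip b c.
Proof. unfold ip, vsub, vadd, vscal; simpl; ring. Qed.
Lemma ip_subr a b c : ip c (vsub a b) = ip c a - ip c b.
Proof. unfold ip, vsub, vadd, vscal; simpl; ring. Qed.
Lemma ip_sym a b : ip a b = ip b a.
Proof. unfold ip; ring. Qed.
Lemma ip_zerol a : ip vzero a = 0.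
Proof. unfold ip; simpl; ring. Qed.

Section A.
Variable x : R * R -> V4.
Variable p : R * R.

Lemma norp_add a b : norp x p (vadd a b) = vadd (norp x p a) (norp x p b).
Proof. unfold norp, tanp, vsub; v4; unfold ip; simpl; ring. Qed.
Lemma norp_scal k a : norp x p (vscal k a) = vscal k (norp x p a).
Proof. unfold norp, tanp, vsub; v4; unfold ip; simpl; ring. Qed.
Lemma norp_sub a b : norp x p (vsub a b) = vsub (norp x p a) (norp x p b).
Proof. unfold vsub. rewrite norp_add, norp_scal; reflexivity. Qed.
Lemma norp_zero : norp x p vzero = vzero.
Proof. unfold norp, tanp, vsub; v4; unfold ip; simpl; ring. Qed.

Hypothesis Hg : gdet x p <> 0.

Lemma norp_xu : norp x p (xu x p) = vzero.
Proof.
  revert Hg. unfold norp, tanp, gi11, gi12, gi22, gdet, g11, g12, g22, vsub.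
  generalize (xu x p) (xv x p). intros [a1 a2 a3 a4] [b1 b2 b3 b4] H.
  unfold ip in *; v4; field; exact H.
Qed.
Lemma norp_xv : norp x p (xv x p) = vzero.
Proof.
  revert Hg. unfold norp, tanp, gi11, gi12, gi22, gdet, g11, g12, g22, vsub.
  generalize (xu x p) (xv x p). intros [a1 a2 a3 a4] [b1 b2 b3 b4] H.
  unfold ip in *; v4; field; exact H.
Qed.
Lemma ip_norp_xu v : ip (norp x p v) (xu x p) = 0.
Proof.
  revert Hg. unfold norp, tanp, gi11, gi12, gi22, gdet, g11, g12, g22, vsub.
  generalize (xu x p) (xv x p). intros [a1 a2 a3 a4] [b1 b2 b3 b4] H.
  destruct v; unfold ip in *; simpl; field; exact H.
Qed.
Lemma ip_norp_xv v : ip (norp x p v) (xv x p) = 0.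
Proof.
  revert Hg. unfold norp, tanp, gi11, gi12, gi22, gdet, g11, g12, g22, vsub.
  generalize (xu x p) (xv x p). intros [a1 a2 a3 a4] [b1 b2 b3 b4] H.
  destruct v; unfold ip in *; simpl; field; exact H.
Qed.
End A.

Lemma ip_nor x p n v : ip n (xu x p) = 0 -> ip n (xv x p) = 0 ->
  ip n (norp x p v) = ip n v.
Proof.
  intros H1 H2. unfold norp, tanp. rewrite ip_subr, ip_addr, !ip_scalr, H1, H2. ring.
Qed.

Definition Lalg (a11 a12 a22 : R) (h1 h2 h3 n : V4) : V4 :=
  vsub (vadd (vscal (-(a11 * ip n h2 + a12 * ip n h3)) h1) (vscal (-(a12 * ip n h2 + a22 * ip n h3)) h2))
       (vadd (vscal (-(a11 * ip n h1 + a12 * ip n h2)) h2) (vscal (-(a12 * ip n h1 + a22 * ip n h2)) h3)).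

Definition LA x p n := Lalg (gi11 x p) (gi12 x p) (gi22 x p) (h11 x p) (h12 x p) (h22 x p) n.

Ltac bs := repeat match goal with
 | |- base (fun q => _ + _) _ => apply base_plus
 | |- base (fun q => _ - _) _ => apply base_minus
 | |- base (fun q => _ * _) _ => apply base_mult
 | |- base (fun _ => _) _ => apply base_const
 | |- base _ _ => (eapply sm_base; eassumption)
 end.

Lemma pd_combo b w a X c Y p : base w p -> base a p -> base X p -> base c p -> base Y p ->
  pd b (fun q => w q + -1 * (a q * X q + c q * Y q)) p =
  pd b w p + -1 * (pd b a p * X p + a p * pd b X p + (pd b c p * Y p + c p * pd b Y p)).
Proof.
  intros Bw Ba BX Bc BY.
  assert (B1 : base (fun q => a q * X q) p) by (apply base_mult; assumption).
  assert (B2 : base (fun q => c q * Y q) p) by (apply base_mult; assumption).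
  assert (B3 : base (fun q => a q * X q + c q * Y q) p) by (apply base_plus; assumption).
  assert (B4 : base (fun q => -1 * (a q * X q + c q * Y q)) p) by (apply base_mult; [apply base_const|assumption]).
  rewrite (pd_plus b w _ p Bw B4).
  rewrite (pd_mult b (fun _ => -1) _ p (base_const _ p) B3).
  rewrite (pd_const b (-1) p).
  rewrite (pd_plus b _ _ p B1 B2).
  rewrite (pd_mult b a X p Ba BX), (pd_mult b c Y p Bc BY). ring.
Qed.

Section M.
Variable U : R * R -> Prop.
Hypothesis Uo : open U.
Variable x : R * R -> V4.
Hypothesis Hx : smoothV_on U x.
Hypothesis Hg : forall q, U q -> gdet x q <> 0.

Definition alpha (W : R * R -> V4) q := gi11 x q * ip (W q) (xu x q) + gi12 x q * ip (W q) (xv x q).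
Definition beta (W : R * R -> V4) q := gi12 x q * ip (W q) (xu x q) + gi22 x q * ip (W q) (xv x q).

Lemma sm_alpha W : smoothV_on U W -> smooth_on U (alpha W).
Proof.
  intros HW; unfold alpha.
  exact (sP U Uo _ _ (sM U Uo _ _ (sm_gi11 U Uo x Hx Hg) (sm_ip U Uo _ _ HW (smV_xu U x Hx)))
                     (sM U Uo _ _ (sm_gi12 U Uo x Hx Hg) (sm_ip U Uo _ _ HW (smV_xv U x Hx)))).
Qed.
Lemma sm_beta W : smoothV_on U W -> smooth_on U (beta W).
Proof.
  intros HW; unfold beta.
  exact (sP U Uo _ _ (sM U Uo _ _ (sm_gi12 U Uo x Hx Hg) (sm_ip U Uo _ _ HW (smV_xu U x Hx)))
                     (sM U Uo _ _ (sm_gi22 U Uo x Hx Hg) (sm_ip U Uo _ _ HW (smV_xv U x Hx)))).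
Qed.

Lemma vpd_norp b W p : smoothV_on U W -> U p ->
  vpd b (fun q => norp x q (W q)) p =
  vsub (vpd b W p) (vadd (vadd (vscal (pd b (alpha W) p) (xu x p)) (vscal (alpha W p) (vpd b (xu x) p)))
                         (vadd (vscal (pd b (beta W) p) (xv x p)) (vscal (beta W p) (vpd b (xv x) p)))).
Proof.
  intros HW Hp.
  pose proof (sm_base U _ p (sm_alpha W HW) Hp) as BA.
  pose proof (sm_base U _ p (sm_beta W HW) Hp) as BB.
  destruct HW as [W1 [W2 [W3 W4]]].
  destruct (smV_xu U x Hx) as [X1 [X2 [X3 X4]]].
  destruct (smV_xv U x Hx) as [Y1 [Y2 [Y3 Y4]]].
  apply V4_eq; simpl.
  - exact (pd_combo b _ (alpha W) _ (beta W) _ p (sm_base U _ p W1 Hp) BA (sm_base U _ p X1 Hp) BB (sm_base U _ p Y1 Hp)).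
  - exact (pd_combo b _ (alpha W) _ (beta W) _ p (sm_base U _ p W2 Hp) BA (sm_base U _ p X2 Hp) BB (sm_base U _ p Y2 Hp)).
  - exact (pd_combo b _ (alpha W) _ (beta W) _ p (sm_base U _ p W3 Hp) BA (sm_base U _ p X3 Hp) BB (sm_base U _ p Y3 Hp)).
  - exact (pd_combo b _ (alpha W) _ (beta W) _ p (sm_base U _ p W4 Hp) BA (sm_base U _ p X4 Hp) BB (sm_base U _ p Y4 Hp)).
Qed.

Lemma Dn_formula b W p : smoothV_on U W -> U p ->
  norp x p (vpd b (fun q => norp x q (W q)) p) =
  vsub (norp x p (vpd b W p)) (vadd (vscal (alpha W p) (norp x p (vpd b (xu x) p)))
                                     (vscal (beta W p) (norp x p (vpd b (xv x) p)))).
Proof.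
  intros HW Hp. rewrite vpd_norp by assumption.
  rewrite norp_sub, !norp_add, !norp_scal, norp_xu, norp_xv by (apply Hg; exact Hp).
  apply V4_eq; simpl; ring.
Qed.

Lemma fact1 b N Y p : smoothV_on U N -> smoothV_on U Y -> (forall q, U q -> ip (N q) (Y q) = 0) -> U p ->
  ip (vpd b N p) (Y p) = - ip (N p) (vpd b Y p).
Proof.
  intros HN HY H0 Hp.
  pose proof (pd_ip U b N Y p HN HY Hp) as E.
  rewrite (pd_zero U Uo b _ p H0 Hp) in E. lra.
Qed.

Lemma schwarzV F p : smoothV_on U F -> U p -> vpd true (vpd false F) p = vpd false (vpd true F) p.
Proof.
  intros [F1 [F2 [F3 F4]]] Hp. apply V4_eq; simpl.
  - exact (schwarz U Uo _ p F1 Hp).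
  - exact (schwarz U Uo _ p F2 Hp).
  - exact (schwarz U Uo _ p F3 Hp).
  - exact (schwarz U Uo _ p F4 Hp).
Qed.

Lemma main_formula N p : smoothV_on U N -> normal_field_on x U N -> U p ->
  Dn x true (Dn x false N) p = vsub (Dn x false (Dn x true N) p) (LA x p (N p)).
Proof.
  intros HN Hn Hp. unfold Dn.
  rewrite (Dn_formula true (vpd false N) p (smV_vpd U false N HN) Hp).
  rewrite (Dn_formula false (vpd true N) p (smV_vpd U true N HN) Hp).
  rewrite (schwarzV N p HN Hp).
  assert (Sx : vpd true (xv x) p = vpd false (xu x) p) by exact (schwarzV x p Hx Hp).
  rewrite !Sx.
  unfold alpha, beta.
  assert (Hxu : smoothV_on U (xu x)) by exact (smV_xu U x Hx).
  assert (Hxv : smoothV_on U (xv x)) by exact (smV_xv U x Hx).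
  assert (Nu : forall q, U q -> ip (N q) (xu x q) = 0) by (intros q Hq; apply (Hn q Hq)).
  assert (Nv : forall q, U q -> ip (N q) (xv x q) = 0) by (intros q Hq; apply (Hn q Hq)).
  rewrite !(fact1 _ N (xu x) p HN Hxu Nu Hp).
  rewrite !(fact1 _ N (xv x) p HN Hxv Nv Hp).
  rewrite !Sx.
  destruct (Hn p Hp) as [Np1 Np2].
  rewrite <- (ip_nor x p (N p) (vpd true (xu x) p) Np1 Np2).
  rewrite <- (ip_nor x p (N p) (vpd false (xu x) p) Np1 Np2).
  rewrite <- (ip_nor x p (N p) (vpd false (xv x) p) Np1 Np2).
  change (norp x p (vpd true (xu x) p)) with (h11 x p).
  change (norp x p (vpd false (xu x) p)) with (h12 x p).
  change (norp x p (vpd false (xv x) p)) with (h22 x p).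
  unfold LA, Lalg.
  generalize (norp x p (vpd false (vpd true N) p)) (h11 x p) (h12 x p) (h22 x p) (N p) (gi11 x p) (gi12 x p) (gi22 x p).
  intros [a1 a2 a3 a4] [b1 b2 b3 b4] [c1 c2 c3 c4] [d1 d2 d3 d4] [e1 e2 e3 e4] r1 r2 r3.
  apply V4_eq; unfold ip; simpl; ring.
Qed.
End M.

Definition d3 a b c d e f g h i := a*(e*i - f*h) - b*(d*i - f*g) + c*(d*h - e*g).
Definition d4 m11 m12 m13 m14 m21 m22 m23 m24 m31 m32 m33 m34 m41 m42 m43 m44 :=
  m11 * d3 m22 m23 m24 m32 m33 m34 m42 m43 m44
  - m12 * d3 m21 m23 m24 m31 m33 m34 m41 m43 m44
  + m13 * d3 m21 m22 m24 m31 m32 m34 m41 m42 m44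
  - m14 * d3 m21 m22 m23 m31 m32 m33 m41 m42 m43.
Definition det4 a b c d := d4 (c1 a) (c2 a) (c3 a) (c4 a) (c1 b) (c2 b) (c3 b) (c4 b)
  (c1 c) (c2 c) (c3 c) (c4 c) (c1 d) (c2 d) (c3 d) (c4 d).

Lemma gram a b c d : det4 a b c d * det4 a b c d =
  d4 (ip a a) (ip a b) (ip a c) (ip a d) (ip b a) (ip b b) (ip b c) (ip b d)
     (ip c a) (ip c b) (ip c c) (ip c d) (ip d a) (ip d b) (ip d c) (ip d d).
Proof.
  destruct a, b, c, d; unfold det4, d4, d3, ip; simpl; ring.
Qed.

Lemma cramer1 a b c d w : det4 a b c d * c1 w =
  d4 (ip w a) (c2 a) (c3 a) (c4 a) (ip w b) (c2 b) (c3 b) (c4 b)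
     (ip w c) (c2 c) (c3 c) (c4 c) (ip w d) (c2 d) (c3 d) (c4 d).
Proof. destruct a, b, c, d, w; unfold det4, d4, d3, ip; simpl; ring. Qed.
Lemma cramer2 a b c d w : det4 a b c d * c2 w =
  d4 (c1 a) (ip w a) (c3 a) (c4 a) (c1 b) (ip w b) (c3 b) (c4 b)
     (c1 c) (ip w c) (c3 c) (c4 c) (c1 d) (ip w d) (c3 d) (c4 d).
Proof. destruct a, b, c, d, w; unfold det4, d4, d3, ip; simpl; ring. Qed.
Lemma cramer3 a b c d w : det4 a b c d * (- c3 w) =
  d4 (c1 a) (c2 a) (ip w a) (c4 a) (c1 b) (c2 b) (ip w b) (c4 b)
     (c1 c) (c2 c) (ip w c) (c4 c) (c1 d) (c2 d) (ip w d) (c4 d).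
Proof. destruct a, b, c, d, w; unfold det4, d4, d3, ip; simpl; ring. Qed.
Lemma cramer4 a b c d w : det4 a b c d * (- c4 w) =
  d4 (c1 a) (c2 a) (c3 a) (ip w a) (c1 b) (c2 b) (c3 b) (ip w b)
     (c1 c) (c2 c) (c3 c) (ip w c) (c1 d) (c2 d) (c3 d) (ip w d).
Proof. destruct a, b, c, d, w; unfold det4, d4, d3, ip; simpl; ring. Qed.

Lemma key4 a b H k w :
  ip a a * ip b b - ip a b * ip a b <> 0 ->
  ip H a = 0 -> ip H b = 0 -> ip H H = 0 ->
  ip k a = 0 -> ip k b = 0 -> ip H k <> 0 ->
  ip w a = 0 -> ip w b = 0 -> ip w H = 0 -> ip w k = 0 -> w = vzero.
Proof.
  intros Hgd Ha Hb HH ka kb Hk wa wb wH wk.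
  assert (aH : ip a H = 0) by (rewrite ip_sym; exact Ha).
  assert (bH : ip b H = 0) by (rewrite ip_sym; exact Hb).
  assert (ak : ip a k = 0) by (rewrite ip_sym; exact ka).
  assert (bk : ip b k = 0) by (rewrite ip_sym; exact kb).
  assert (kH : ip k H = ip H k) by apply ip_sym.
  assert (ba : ip b a = ip a b) by apply ip_sym.
  assert (D : det4 a b H k <> 0).
  { intro D0. pose proof (gram a b H k) as G.
    rewrite D0 in G.
    rewrite ba, Ha, aH, Hb, bH, HH, ka, ak, kb, bk, kH in G.
    assert (E2 : d4 (ip a a) (ip a b) 0 0 (ip a b) (ip b b) 0 0 0 0 0 (ip H k) 0 0 (ip H k) (ip k k)
        = - ((ip a a * ip b b - ip a b * ip a b) * (ip H k * ip H k))) by (unfold d4, d3; ring).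
    rewrite E2 in G.
    assert (E : (ip a a * ip b b - ip a b * ip a b) * (ip H k * ip H k) = 0) by lra.
    apply Rmult_integral in E. destruct E as [E|E]; [exact (Hgd E)|].
    apply Rmult_integral in E; destruct E; auto. }
  pose proof (cramer1 a b H k w) as C1.
  pose proof (cramer2 a b H k w) as C2.
  pose proof (cramer3 a b H k w) as C3.
  pose proof (cramer4 a b H k w) as C4.
  rewrite wa, wb, wH, wk in C1, C2, C3, C4. unfold d4, d3 in C1, C2, C3, C4.
  apply V4_eq; simpl.
  - apply (Rmult_eq_reg_l (det4 a b H k)); [rewrite C1; ring|exact D].
  - apply (Rmult_eq_reg_l (det4 a b H k)); [rewrite C2; ring|exact D].
  - apply (Rmult_eq_reg_l (det4 a b H k)); [|exact D]. assert (X: det4 a b H k * c3 w = 0) by lra. rewrite X; ring.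
  - apply (Rmult_eq_reg_l (det4 a b H k)); [|exact D]. assert (X: det4 a b H k * c4 w = 0) by lra. rewrite X; ring.
Qed.

Lemma L_skew a11 a12 a22 h1 h2 h3 n m :
  ip (Lalg a11 a12 a22 h1 h2 h3 n) m = - ip n (Lalg a11 a12 a22 h1 h2 h3 m).
Proof. destruct h1, h2, h3, n, m; unfold Lalg, ip; simpl; ring. Qed.

Lemma L_scal a11 a12 a22 h1 h2 h3 k n :
  Lalg a11 a12 a22 h1 h2 h3 (vscal k n) = vscal k (Lalg a11 a12 a22 h1 h2 h3 n).
Proof. destruct h1, h2, h3, n; unfold Lalg, ip; apply V4_eq; simpl; ring. Qed.

Lemma L_perp a11 a12 a22 h1 h2 h3 n a :
  ip h1 a = 0 -> ip h2 a = 0 -> ip h3 a = 0 -> ip (Lalg a11 a12 a22 h1 h2 h3 n) a = 0.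
Proof.
  intros E1 E2 E3; unfold Lalg. rewrite ip_subl, !ip_addl, !ip_scall, E1, E2, E3; ring.
Qed.

Lemma endgame a b a11 a12 a22 h1 h2 h3 H k n :
  ip a a * ip b b - ip a b * ip a b <> 0 ->
  ip h1 a = 0 -> ip h2 a = 0 -> ip h3 a = 0 ->
  ip h1 b = 0 -> ip h2 b = 0 -> ip h3 b = 0 ->
  ip H a = 0 -> ip H b = 0 -> ip H H = 0 ->
  Lalg a11 a12 a22 h1 h2 h3 H = vzero ->
  ip k a = 0 -> ip k b = 0 -> ip H k <> 0 ->
  ip n a = 0 -> ip n b = 0 -> Lalg a11 a12 a22 h1 h2 h3 n = vzero.
Proof.
  intros Hgd h1a h2a h3a h1b h2b h3b Ha Hb HH LH ka kb Hk na nb.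
  set (L := Lalg a11 a12 a22 h1 h2 h3).
  assert (wa : ip (L n) a = 0) by (apply L_perp; assumption).
  assert (wb : ip (L n) b = 0) by (apply L_perp; assumption).
  assert (wH : ip (L n) H = 0).
  { unfold L; rewrite L_skew, LH, ip_sym, ip_zerol; ring. }
  assert (wn : ip (L n) n = 0).
  { pose proof (L_skew a11 a12 a22 h1 h2 h3 n n) as S. fold L in S.
    rewrite (ip_sym n (L n)) in S. lra. }
  destruct (Req_dec (ip H n) 0) as [Hn0|Hn0].
  - set (lam := ip n k / ip H k).
    assert (E : vsub n (vscal lam H) = vzero).
    { apply (key4 a b H k); auto.
      - rewrite ip_subl, ip_scall, na, Ha; ring.
      - rewrite ip_subl, ip_scall, nb, Hb; ring.
      - rewrite ip_subl, ip_scall, ip_sym, Hn0, HH; ring.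
      - rewrite ip_subl, ip_scall. unfold lam; field; exact Hk. }
    assert (E2 : n = vscal lam H).
    { apply V4_eq; apply (f_equal c1) in E as e1; apply (f_equal c2) in E as e2;
      apply (f_equal c3) in E as e3; apply (f_equal c4) in E as e4; simpl in *; lra. }
    rewrite E2. unfold L; rewrite L_scal, LH. apply V4_eq; simpl; ring.
  - apply (key4 a b H n); auto.
Qed.

Lemma H_normal x q : gdet x q <> 0 -> ip (Hmc x q) (xu x q) = 0 /\ ip (Hmc x q) (xv x q) = 0.
Proof.
  intros Hg. unfold Hmc, h11, h12, h22.
  rewrite !ip_scall, !ip_addl, !ip_scall.
  rewrite !ip_norp_xu, !ip_norp_xv by exact Hg. split; ring.
Qed.

Lemma flip_nz v : v <> vzero -> ip v (mkV4 (c1 v) (c2 v) (- c3 v) (- c4 v)) <> 0.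
Proof.
  destruct v as [h1 h2 h3 h4]; unfold ip; simpl; intros Hn E. apply Hn.
  assert (h1 * h1 = 0) by nra. assert (h2 * h2 = 0) by nra.
  assert (h3 * h3 = 0) by nra. assert (h4 * h4 = 0) by nra.
  unfold vzero; f_equal; nra.
Qed.

Theorem lemma3p1 (U : R * R -> Prop) (x : R * R -> V4) :
  lorentz_surface U x -> quasi_minimal U x -> parallel_mean_curvature U x ->
  flat_normal_connection U x.
Proof.
  intros [Uo [Hx Hlor]] Hqm Hpar xi Hxi Hnor p Hp.
  assert (Hg : forall q, U q -> gdet x q <> 0).
  { intros q Hq; pose proof (Hlor q Hq) as L; unfold lorentzian_at in L; lra. }
  assert (HnH : normal_field_on x U (Hmc x)).
  { intros q Hq; apply H_normal; apply Hg; exact Hq. }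
  pose proof (smV_H U Uo x Hx Hg) as HsH.
  assert (Z : forall b F, (forall q, U q -> F q = vzero) -> norp x p (vpd b F p) = vzero).
  { intros b F HF.
    assert (E : vpd b F p = vzero).
    { apply V4_eq; simpl; apply (pd_zero U Uo); auto;
      intros q Hq; rewrite (HF q Hq); reflexivity. }
    rewrite E; apply norp_zero. }
  assert (LH : LA x p (Hmc x p) = vzero).
  { pose proof (main_formula U Uo x Hx Hg (Hmc x) p HsH HnH Hp) as M.
    unfold Dn in M.
    rewrite (Z true (fun q => norp x q (vpd false (Hmc x) q))) in M
      by (intros q Hq; apply (Hpar q Hq)).
    rewrite (Z false (fun q => norp x q (vpd true (Hmc x) q))) in M
      by (intros q Hq; apply (Hpar q Hq)).
    apply V4_eq; apply (f_equal c1) in M as e1; apply (f_equal c2) in M as e2;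
      apply (f_equal c3) in M as e3; apply (f_equal c4) in M as e4; simpl in *; lra. }
  assert (Lxi : LA x p (xi p) = vzero).
  { destruct (HnH p Hp) as [Ha Hb]. destruct (Hnor p Hp) as [na nb].
    destruct (Hqm p Hp) as [Hnz HH].
    set (H := Hmc x p) in *.
    set (e := mkV4 (c1 H) (c2 H) (- c3 H) (- c4 H)).
    assert (Hgp := Hg p Hp).
    apply (endgame (xu x p) (xv x p) _ _ _ _ _ _ H (norp x p e)).
    all: first [ assumption | (apply ip_norp_xu; exact Hgp) | (apply ip_norp_xv; exact Hgp)
               | (rewrite ip_sym; apply ip_norp_xu; exact Hgp) | (rewrite ip_sym; apply ip_norp_xv; exact Hgp) | idtac ].
    rewrite ip_nor by assumption. apply flip_nz; exact Hnz. }
  rewrite (main_formula U Uo x Hx Hg xi p Hxi Hnor Hp), Lxi.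
  apply V4_eq; simpl; ring.
Qed.
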